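(* Let $A\in\mathbb{R}^{n\times n}$ be symmetric, $g\in\mathbb{R}^n$ nonzero, $\Delta>0$, and let $x_k,\lambda_k,T_k,\beta_k$ be the quantities of the $k$-th step of the GLTR method described in the context. Let $r_k=(A+\lambda_kI)x_k+g$ and let $\kappa_k=\lambda_{\max}(T_k+\lambda_kI)/\lambda_{\min}(T_k+\lambda_kI)$ be the 2-condition number of $T_k+\lambda_kI$. Then $$\|r_k\|\le 2\beta_k\|x_k\|\Big(\frac{\sqrt{\kappa_k}-1}{\sqrt{\kappa_k}+1}\Big)^{k-1}.$$
   Context: All norms are Euclidean. The Lanczos process on $A$ with starting vector $g$ gives $Q_k=[q_1,\ldots,q_k]$ with orthonormal columns spanning $\mathcal{K}_k(A,g)=\mathrm{span}\{g,\ldots,A^{k-1}g\}$, $q_1=g/\|g\|$, symmetric tridiagonal $T_k=Q_k^TAQ_k$ with off-diagonal entries $\beta_1,\ldots,\beta_{k-1}$, and $AQ_k=Q_kT_k+\beta_kq_{k+1}e_k^T$ ($\beta_k$ is the $(k,k+1)$ entry of $T_{k+1}$). The GLTR iterate is $x_k=Q_kh_k$ where $h_k$ is the minimizer of $\frac12h^TT_kh+\|g\|h^Te_1$ over $\|h\|\le\Delta$ with Lagrange multiplier $\lambda_k\ge0$: $(T_k+\lambda_kI)h_k=-\|g\|e_1$, $\lambda_k(\Delta-\|h_k\|)=0$, and $T_k+\lambda_kI$ is positive definite. *)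

(* Defs.v *)
From HB Require Import structures.
From mathcomp Require Import all_boot all_order all_algebra.
Set Implicit Arguments. Unset Strict Implicit. Unset Printing Implicit Defensive.
Import Order.TTheory GRing.Theory Num.Theory.
Local Open Scope ring_scope.

Definition vnorm (R : rcfType) (n : nat) (v : 'cV[R]_n) : R :=
  Num.sqrt (\sum_(i < n) v i 0 ^+ 2).

Definition e_first (R : rcfType) (k : nat) : 'cV[R]_k :=
  \col_(i < k) (nat_of_ord i == 0%N)%:R.
Definition e_last (R : rcfType) (k : nat) : 'cV[R]_k :=
  \col_(i < k) (nat_of_ord i == k.-1)%:R.

(* Krylov matrix: rows are (A^j g)^T, j = 0..k-1; its row space is K_k(A,g) *)
Definition krylov (R : rcfType) (n k : nat) (A : 'M[R]_n) (g : 'cV[R]_n)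
  : 'M[R]_(k, n) :=
  \matrix_(j < k) (iter j (mulmx A) g)^T.

Definition sc (R : rcfType) (M : 'M[R]_1) : R := M ord0 ord0.

Definition tr_model (R : rcfType) (k : nat) (T : 'M[R]_k) (gn : R) (h : 'cV[R]_k) : R :=
  2^-1 * sc (h^T *m T *m h) + gn * sc (h^T *m e_first R k).

Definition tridiagonal (R : rcfType) (k : nat) (T : 'M[R]_k) : Prop :=
  forall i j : 'I_k, ((i.+1 < j)%N || (j.+1 < i)%N) -> T i j = 0.

Definition posdef (R : rcfType) (k : nat) (M : 'M[R]_k) : Prop :=
  forall v : 'cV[R]_k, v != 0 -> 0 < sc (v^T *m M *m v).

(* Main.v *)
Require Import Defs.
From HB Require Import structures.
From mathcomp Require Import all_boot all_order all_algebra.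
From mathcomp Require Import ring lra.
From mathcomp Require Import spectral sesquilinear.
From mathcomp.real_closed Require Import complex.
Import Order.TTheory GRing.Theory Num.Theory Num.Def.
Local Open Scope ring_scope.

Section Cheb.
Context {R : rcfType}.

Fixpoint chs (x : R) (n : nat) : R * R :=
  match n with
  | 0 => (1, x)
  | n'.+1 => let pq := chs x n' in (pq.2, 2 * x * pq.2 - pq.1)
  end.

Fixpoint chp (L : {poly R}) (n : nat) : {poly R} * {poly R} :=
  match n with
  | 0 => (1, L)
  | n'.+1 => let pq := chp L n' in (pq.2, L * pq.2 + L * pq.2 - pq.1)
  end.

Lemma chp_eval (L : {poly R}) n t :
  ((chp L n).1).[t] = (chs L.[t] n).1 /\ ((chp L n).2).[t] = (chs L.[t] n).2.
Proof.
elim: n => [|n [IH1 IH2]] /=; first by rewrite hornerC.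
split=> //; rewrite !hornerE IH1 IH2; ring.
Qed.

Lemma chp_size (L : {poly R}) n : (size L <= 2)%N ->
  (size (chp L n).1 <= n.+1)%N /\ (size (chp L n).2 <= n.+2)%N.
Proof.
move=> sL; elim: n => [|n [IH1 IH2]] /=; first by rewrite size_poly1.
split=> //.
have hm : (size (L * (chp L n).2)%R <= n.+3)%N.
  apply: (leq_trans (size_mul_leq _ _)).
  rewrite -subn1 leq_subLR add1n. by apply: (leq_trans (leq_add sL IH2)).
apply: (leq_trans (size_add _ _)); rewrite geq_max size_opp.
apply/andP; split; last first. apply: (leq_trans IH1). exact: leqW (leqnSn _).
apply: (leq_trans (size_add _ _)); by rewrite geq_max hm.
Qed.

Lemma chs_inv x n :
  let u := (chs x n).1 in let v := (chs x n).2 in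
  v ^+ 2 - 2 * x * u * v + u ^+ 2 = 1 - x ^+ 2.
Proof.
elim: n => [|n IH] /=; first by ring.
move: IH => /=; set u := (chs x n).1; set v := (chs x n).2 => IH.
rewrite -IH; ring.
Qed.

Lemma chs_bound x n : x ^+ 2 <= 1 ->
  ((chs x n).1) ^+ 2 <= 1 /\ ((chs x n).2) ^+ 2 <= 1.
Proof.
move=> hx; elim: n => [|n [IH1 IH2]] /=; first by rewrite expr1n lexx.
split=> //.
have := chs_inv x n.+1 => /=.
set v := (chs x n).2; set w := 2 * x * v - (chs x n).1 => I.
have e1 : (v - x * w) ^+ 2 = (1 - x ^+ 2) * (1 - w ^+ 2).
  apply/eqP; rewrite -subr_eq0.
  have -> : (v - x * w) ^+ 2 - (1 - x ^+ 2) * (1 - w ^+ 2) =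
    (w ^+ 2 - 2 * x * v * w + v ^+ 2) - (1 - x ^+ 2) by ring.
  by rewrite I subrr.
have e2 : (w - x * v) ^+ 2 = (1 - x ^+ 2) * (1 - v ^+ 2).
  apply/eqP; rewrite -subr_eq0.
  have -> : (w - x * v) ^+ 2 - (1 - x ^+ 2) * (1 - v ^+ 2) =
    (w ^+ 2 - 2 * x * v * w + v ^+ 2) - (1 - x ^+ 2) by ring.
  by rewrite I subrr.
have [hlt|heq] := ltrP (x ^+ 2) 1.
  have : 0 <= (1 - x ^+ 2) * (1 - w ^+ 2) by rewrite -e1 sqr_ge0.
  by rewrite pmulr_rge0 ?subr_gt0 // subr_ge0.
have hx1 : x ^+ 2 = 1 by apply/eqP; rewrite eq_le hx heq.
move: e2; rewrite hx1 subrr mul0r => /eqP; rewrite sqrf_eq0 subr_eq0 => /eqP ->.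
by rewrite exprMn hx1 mul1r.
Qed.

Lemma chs_closed (th mu : R) n : th * mu = 1 ->
  chs ((th + mu) / 2) n = ((th ^+ n + mu ^+ n) / 2, (th ^+ n.+1 + mu ^+ n.+1) / 2).
Proof.
move=> tm; elim: n => [|n IH] /=.
  by congr pair; rewrite ?expr0 ?expr1 //; field.
rewrite IH /=; congr pair.
apply/eqP; rewrite -subr_eq0.
have -> : 2 * ((th + mu) / 2) * ((th ^+ n.+1 + mu ^+ n.+1) / 2) -
  (th ^+ n + mu ^+ n) / 2 - (th ^+ n.+2 + mu ^+ n.+2) / 2 =
  (th * mu - 1) * (th ^+ n + mu ^+ n) / 2.
  by rewrite !exprS; field.
by rewrite tm subrr !mul0r.
Qed.

End Cheb.
Arguments chs {R}.
Arguments chp {R}.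
Section Cheb2.
Context {R : rcfType}.

Lemma size_lin (c d : R) : (size (c%:P * 'X + d%:P)%R <= 2)%N.
Proof.
rewrite size_MXaddC; case: ifP => // _.
by rewrite ltnS size_polyC leq_b1.
Qed.

Lemma cheb_exists (m : nat) (a b : R) : 0 < a -> a <= b ->
  exists s : {poly R}, [/\ (size s <= m.+1)%N, s.[0] = 1 &
    forall t, a <= t <= b -> `|s.[t]| <=
      2 * ((Num.sqrt (b / a) - 1) / (Num.sqrt (b / a) + 1)) ^+ m].
Proof.
move=> a0 ab.
set sg := Num.sqrt (b / a).
have ba1 : 1 <= b / a by rewrite ler_pdivlMr // mul1r.
have sg1 : 1 <= sg by rewrite /sg -sqrtr1 ler_sqrt // (le_trans ler01 ba1).
have sgsq : sg ^+ 2 = b / a by rewrite /sg sqr_sqrtr // (le_trans ler01 ba1).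
have sgp : 0 < sg + 1 by rewrite (lt_le_trans ltr01) // lerDr (le_trans ler01 sg1).
have rho0 : 0 <= (sg - 1) / (sg + 1) by rewrite divr_ge0 ?subr_ge0 // ltW.
have [eab|nab] := eqVneq a b.
  case: m => [|m].
    exists 1; split; rewrite ?size_poly1 ?hornerC //.
    by move=> t _; rewrite expr0 mulr1 hornerE normr1 ler1n.
  exists ((- a^-1)%:P * 'X + 1%:P); split.
  - by apply: (leq_trans (size_lin _ _)).
  - by rewrite !hornerE.
  move=> t /andP[h1 h2]; have -> : t = a by apply/eqP; rewrite eq_le h1 andbT eab.
  rewrite !hornerE mulNr mulVf ?gt_eqF // addrC subrr normr0.
  by rewrite mulr_ge0 // exprn_ge0.
have ltab : a < b by rewrite lt_neqAle nab ab.
have bma : 0 < b - a by rewrite subr_gt0.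
have sgg1 : 1 < sg.
  rewrite lt_neqAle sg1 andbT; apply/eqP => e.
  move: sgsq; rewrite -e expr1n => /(congr1 (fun z => z * a)).
  rewrite mul1r mulfVK ?gt_eqF // => ea.
  by rewrite ea eqxx in nab.
have sgm : 0 < sg - 1 by rewrite subr_gt0.
pose L : {poly R} := (- (2 / (b - a)))%:P * 'X + ((b + a) / (b - a))%:P.
have LE t : L.[t] = ((b + a) - 2 * t) / (b - a).
  rewrite /L !hornerE; field; by rewrite gt_eqF.
pose th := (sg + 1) / (sg - 1); pose mu := (sg - 1) / (sg + 1).
have thmu : th * mu = 1 by rewrite /th /mu; field; rewrite ?gt_eqF.
have L0 : L.[0] = (th + mu) / 2.
  rewrite LE /th /mu mulr0 subr0.
  have eb : b = sg ^+ 2 * a by rewrite sgsq mulfVK // gt_eqF.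
  rewrite eb; field; rewrite ?gt_eqF //.
  by rewrite -eb.
pose tau := (chs L.[0] m).1.
have tauE : tau = (th ^+ m + mu ^+ m) / 2 by rewrite /tau L0 chs_closed.
have thp : 0 < th by rewrite divr_gt0.
have mup : 0 < mu by rewrite divr_gt0.
have taulb : th ^+ m / 2 <= tau.
  by rewrite tauE ler_pM2r ?invr_gt0 ?ltr0n // lerDl exprn_ge0 // ltW.
have taup : 0 < tau by rewrite (lt_le_trans _ taulb) // divr_gt0 ?exprn_gt0.
pose P := (chp L m).1.
exists (tau^-1 *: P); split.
- apply: (leq_trans (size_scale_leq _ _)).
  by have [] := chp_size L m (size_lin _ _).
- rewrite hornerZ /P (chp_eval L m 0).1 -/tau mulVf // gt_eqF //.
move=> t /andP[h1 h2].
have Lt : L.[t] ^+ 2 <= 1.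
  rewrite -real_normK ?num_real // expr_le1 // LE normrM normfV.
  rewrite (gtr0_norm bma) ler_pdivrMr // mul1r ler_norml; apply/andP; split.
    lra.
  lra.
have Pt : `|P.[t]| <= 1.
  have [hb _] := chs_bound _ m Lt.
  rewrite /P (chp_eval L m t).1.
  by rewrite -(expr_le1 (n:=2)) // real_normK ?num_real.
rewrite hornerZ normrM gtr0_norm ?invr_gt0 //.
apply: (le_trans (ler_wpM2l _ Pt)); first by rewrite ltW ?invr_gt0.
rewrite mulr1 -/mu.
have -> : 2 * mu ^+ m = (th ^+ m / 2)^-1.
  rewrite invfM invrK -exprVn.
  have -> : th^-1 = mu by rewrite /th /mu invf_div.
  by rewrite mulrC.
by rewrite lef_pV2 ?posrE // divr_gt0 ?exprn_gt0.
Qed.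

End Cheb2.
Section Tri.
Context {R : rcfType}.

Lemma poly_trunc (p : {poly R}) N : (size p <= N)%N -> p = \poly_(i < N) p`_i.
Proof.
move=> sp; apply/polyP => j; rewrite coef_poly.
case: ifP => // /negbT; rewrite -leqNgt => hj.
by rewrite nth_default // (leq_trans sp hj).
Qed.

Lemma hm_sumN {k} (M : 'M[R]_k.+1) (p : {poly R}) N : (size p <= N)%N ->
  horner_mx M p = \sum_(i < N) p`_i *: M ^+ i.
Proof.
move=> sp; rewrite {1}(poly_trunc _ _ sp) poly_def linear_sum; apply: eq_bigr => i _.
by rewrite linearZ rmorphXn /= horner_mx_X.
Qed.

Lemma tri_pow0 k (M : 'M[R]_k.+1) : tridiagonal M ->
  forall i (j : 'I_k.+1), (i < j)%N -> (M ^+ i) j ord0 = 0.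
Proof.
move=> tM; elim=> [|i IH] j hij.
  by rewrite expr0 mxE; case: eqP => // ej; rewrite ej ltnn in hij.
rewrite exprS -mulmxE mxE big1 // => l _.
have [hl|hl] := boolP (l.+1 < j)%N.
  by rewrite tM ?mul0r // hl orbT.
rewrite IH ?mulr0 //.
rewrite -ltnNge ltnS in hl; by rewrite -ltnS (leq_trans hij hl).
Qed.

Lemma mul_efirst k m (A : 'M[R]_(m, k.+1)) j : (A *m e_first R k.+1) j 0 = A j ord0.
Proof.
rewrite mxE big_ord_recl /= mxE eqxx mulr1 big1 ?addr0 // => i _.
by rewrite mxE /= mulr0.
Qed.

Lemma key_last k (M : 'M[R]_k.+1) (s : {poly R}) (h : 'cV[R]_k.+1) c :
  tridiagonal M -> (size s <= k.+1)%N -> s.[0] = 1 ->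
  M *m h = c *: e_first R k.+1 ->
  (horner_mx M s *m h) ord_max 0 = h ord_max 0.
Proof.
move=> tM ss s0 Mh.
rewrite (hm_sumN M _ _ ss) mulmx_suml summxE big_ord_recl /=.
rewrite expr0 -scalemxAl mul1mx mxE -horner_coef0 s0 mul1r big1 ?addr0 // => i _.
rewrite /bump /= add1n exprSr -scalemxAl -mulmxE -mulmxA Mh -scalemxAr.
by rewrite scalerA mxE mul_efirst tri_pow0 ?mulr0.
Qed.

End Tri.


Section QF.
Context {K : numClosedFieldType}.
Lemma qf_diag n (g : 'rV[K]_n) (z : 'cV[K]_n) :
  ((z^T ^ conjC)%sesqui *m diag_mx g *m z) 0 0 = \sum_i (conjC (z i 0)) * g 0 i * z i 0.
Proof.
rewrite mul_mx_diag mxE; apply: eq_bigr => i _; by rewrite !mxE.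
Qed.

Lemma qf_unit n (P : 'M[K]_n) (e : 'rV[K]_n) (z : 'cV[K]_n) c :
  P *m (P^T ^ conjC)%sesqui = 1%:M ->
  (forall i, conjC (e 0 i) * e 0 i <= c) ->
  (((((P^T ^ conjC)%sesqui *m diag_mx e *m z)^T) ^ conjC)%sesqui *m
      ((P^T ^ conjC)%sesqui *m diag_mx e *m z)) 0 0
  <= c * ((z^T ^ conjC)%sesqui *m z) 0 0.
Proof.
move=> PP he.
rewrite !trmx_mul !map_mxM trmxCK tr_diag_mx map_diag_mx.
rewrite !mulmxA -[(_ *m P) *m (P ^t*)%sesqui]mulmxA PP mulmx1.
rewrite -[_ *m diag_mx _ *m diag_mx _]mulmxA mulmx_diag qf_diag.
rewrite [X in _ <= _ * X]mxE mulr_sumr; apply: ler_sum => i _.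
rewrite !mxE -mulrA [_ * z i 0]mulrC mulrA mulrC [X in _ <= X]mulrC.
rewrite [X in _ <= X]mulrC; apply: ler_wpM2r; last exact: he.
by rewrite mulrC mul_conjC_ge0.
Qed.
End QF.

Section Spec.
Context {R : rcfType}.
Local Notation f := (real_complex R).

Lemma phr (x : R) : f x \is Num.real.
Proof. by rewrite realE !lecE /= !eqxx /= le_total. Qed.
Lemma phc (x : R) : (f x)^* = f x.
Proof. by rewrite conj_Creal // phr. Qed.

Lemma qf_map n (u : 'cV[R]_n) :
  f (sc (u^T *m u)) = ((((map_mx f u)^T) ^ conjC)%sesqui *m map_mx f u) 0 0.
Proof.
rewrite /sc !mxE rmorph_sum; apply: eq_bigr => i _; rewrite !mxE rmorphM /=.
by rewrite phc.
Qed.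

Lemma spec_bound k (M : 'M[R]_k.+1) (p : {poly R}) (C : R) (v : 'cV[R]_k.+1) :
  M^T = M -> (forall a, eigenvalue M a -> p.[a] ^+ 2 <= C ^+ 2) ->
  sc ((horner_mx M p *m v)^T *m (horner_mx M p *m v)) <= C ^+ 2 * sc (v^T *m v).
Proof.
move=> sM hp.
set Mc := map_mx f M.
have herm : Mc \is hermsymmx.
  apply/is_hermitianmxP; rewrite expr0 scale1r.
  apply/matrixP => i j; rewrite !mxE phc -[in LHS]sM mxE //.
have /orthomx_spectralP Meq := hermitian_normalmx herm.
set P := spectralmx Mc in Meq; set d := spectral_diag Mc in Meq.
have Pu : P \is unitarymx := spectral_unitarymx Mc.
have Punit : P \in unitmx := spectral_unit Mc.
have PiP : invmx P = (P^T ^ conjC)%sesqui := invmx_unitary Pu.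
have PPt : P *m (P^T ^ conjC)%sesqui = 1%:M by apply/unitarymxP.
have PtP : (P^T ^ conjC)%sesqui *m P = 1%:M by rewrite -PiP mulVmx.
have dreal : d \is a realmx := hermitian_spectral_diag_real herm.
have hu : forall i, conjC ((map_poly f p).[d 0 i]) * (map_poly f p).[d 0 i] <= f (C ^+ 2).
  move=> i.
  have dr : d 0 i \is Num.real by move/mxOverP: dreal => /(_ 0 i).
  set r := @complex.Re R (d 0 i).
  have fr : f r = d 0 i by rewrite /r complexRe; apply/Creal_ReP.
  have eigc : eigenvalue Mc (d 0 i).
    apply/eigenvalueP; exists (row i P).
      rewrite {1}Meq !mulmxA -row_mul mulmxV // -[row i 1%:M *m _]row_mul mul1mx.
      by rewrite row_diag_mx -scalemxAl -rowE.
    apply/eqP => e; have := congr1 (mulmx^~ (invmx P)) e.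
    rewrite -row_mul mulmxV // mul0mx => /rowP/(_ i); rewrite !mxE eqxx /=.
    by move/eqP; rewrite oner_eq0.
  have eigr : eigenvalue M r.
    move: eigc; rewrite !eigenvalue_root_char -fr /Mc -map_char_poly /root horner_map.
    by rewrite fmorph_eq0.
  rewrite -fr horner_map phc -rmorphM lecR -expr2; exact: hp.
rewrite -lecR rmorphM /= !qf_map map_mxM map_horner_mx -/Mc {1 2}Meq.
rewrite horner_mx_uconjC // horner_mx_diag PiP.
set D := diag_mx _; set vc := map_mx f v.
rewrite -[(P^T ^ conjC)%sesqui *m D *m P *m vc]mulmxA.
apply: (le_trans (@qf_unit _ _ _ _ _ (f (C ^+ 2)) PPt _)); first by move=> i; rewrite mxE; exact: hu.
rewrite le_eqVlt; apply/orP; left; apply/eqP; congr (_ * _).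
rewrite trmx_mul map_mxM mulmxA -[_ *m _ *m P]mulmxA PtP mulmx1.
by []. Qed.

End Spec.
Section Main.
Context {R : rcfType}.

Lemma vnorm_sc n (v : 'cV[R]_n) : vnorm v = Num.sqrt (sc (v^T *m v)).
Proof.
rewrite /vnorm /sc mxE; congr Num.sqrt; apply: eq_bigr => i _.
by rewrite !mxE expr2.
Qed.

Lemma sc_ge0 n (v : 'cV[R]_n) : 0 <= sc (v^T *m v).
Proof.
rewrite /sc mxE; apply: sumr_ge0 => i _; rewrite mxE; by rewrite -expr2 sqr_ge0.
Qed.

Lemma sc_pos n (v : 'cV[R]_n) : v != 0 -> 0 < sc (v^T *m v).
Proof.
move=> v0.
have [i vi] : exists i, v i 0 != 0.
  apply/existsP; apply: contraR v0 => /existsPn H; apply/eqP/matrixP => i j.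
  by rewrite ord1 mxE; move: (H i); rewrite negbK => /eqP.
rewrite /sc mxE (bigD1 i) //= mxE.
have h1 : 0 < v i 0 * v i 0 by rewrite lt_def -expr2 sqr_ge0 andbT expf_neq0.
apply: (lt_le_trans h1); rewrite lerDl sumr_ge0 // => j _.
by rewrite mxE -expr2 sqr_ge0.
Qed.

Lemma last_le n (w : 'cV[R]_n) i : w i 0 ^+ 2 <= sc (w^T *m w).
Proof.
rewrite /sc mxE (bigD1 i) //= mxE -expr2 lerDl sumr_ge0 // => j _.
by rewrite mxE -expr2 sqr_ge0.
Qed.

Lemma vnormZ n (a : R) (v : 'cV[R]_n) : vnorm (a *: v) = `|a| * vnorm v.
Proof.
rewrite /vnorm (eq_bigr (fun i => a ^+ 2 * v i 0 ^+ 2)); last first.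
  by move=> i _; rewrite mxE exprMn.
by rewrite -mulr_sumr sqrtrM ?sqr_ge0 // sqrtr_sqr.
Qed.

End Main.

Theorem theorem3p8 (R : rcfType) (n k : nat)
  (A : 'M[R]_n) (g : 'cV[R]_n) (Delta : R)
  (Q : 'M[R]_(n, k)) (T : 'M[R]_k) (beta : R) (q : 'cV[R]_n)
  (h : 'cV[R]_k) (lambda : R) (lmax lmin : R) :
  A^T = A -> g != 0 -> 0 < Delta -> (0 < k)%N ->
  (* Lanczos quantities *)
  Q^T *m Q = 1%:M ->
  (Q^T :=: krylov k A g)%MS ->
  Q *m e_first R k = (vnorm g)^-1 *: g ->
  T = Q^T *m A *m Q ->
  tridiagonal T ->
  0 <= beta -> vnorm q = 1 -> (0 < beta -> Q^T *m q = 0) ->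
  A *m Q = Q *m T + beta *: (q *m (e_last R k)^T) ->
  (* GLTR subproblem solution h_k with multiplier lambda_k *)
  vnorm h <= Delta ->
  (forall h' : 'cV[R]_k, vnorm h' <= Delta ->
     tr_model T (vnorm g) h <= tr_model T (vnorm g) h') ->
  0 <= lambda ->
  (T + lambda%:M) *m h = - (vnorm g *: e_first R k) ->
  lambda * (Delta - vnorm h) = 0 ->
  posdef (T + lambda%:M) ->
  (* extreme eigenvalues of T_k + lambda_k I *)
  eigenvalue (T + lambda%:M) lmax ->
  (forall a, eigenvalue (T + lambda%:M) a -> a <= lmax) ->
  eigenvalue (T + lambda%:M) lmin ->
  (forall a, eigenvalue (T + lambda%:M) a -> lmin <= a) ->
  let x := Q *m h in
  let r := (A + lambda%:M) *m x + g in
  let kappa := lmax / lmin in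
  vnorm r <= 2 * beta * vnorm x *
    ((Num.sqrt kappa - 1) / (Num.sqrt kappa + 1)) ^+ k.-1.
Proof.
case: k Q T h => [|k] Q T h HA g0 D0 k0; first by rewrite ltnn in k0.
move=> QQ QK Qe1 HT tT b0 nq bq AQ nh hmin l0 Th cs pd emax hmax emin hmin'.
cbv zeta; set x := Q *m h; set r := _ + g; set kappa := lmax / lmin.
set M := T + lambda%:M in Th pd emax hmax emin hmin'.
have sT : T^T = T by rewrite HT !trmx_mul trmxK HA mulmxA.
have sM : M^T = M by rewrite /M linearD /= sT tr_scalar_mx.
have tM : tridiagonal M.
  move=> i j hij; rewrite !mxE tT // add0r.
  case: eqP => [e|_]; last by rewrite mulr0n.
  by move: hij; rewrite e orbb ltnNge leqW.
have lminp : 0 < lmin.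
  have /eigenvalueP [u uM u0] := emin.
  have := pd u^T; rewrite trmx_eq0 => /(_ u0).
  rewrite trmxK uM -scalemxAl /sc mxE.
  have := @sc_pos R _ u^T; rewrite trmx_eq0 trmxK => /(_ u0) up.
  by rewrite pmulr_lgt0.
have lle : lmin <= lmax := hmin' lmax emax.
have [s [ss s0 sb]] := cheb_exists k _ _ lminp lle.
set C := 2 * _ in sb.
have C0 : 0 <= C.
  by apply: (le_trans (normr_ge0 _) (sb lmin _)); rewrite lexx lle.
have hM : M *m h = (- vnorm g) *: e_first R k.+1 by rewrite Th scaleNr.
have hl := @key_last R k M s h (- vnorm g) tM ss s0 hM.
have hsb := @spec_bound R k M s C h sM.
have hsb' : sc ((horner_mx M s *m h)^T *m (horner_mx M s *m h)) <= C ^+ 2 * sc (h^T *m h).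
  apply: hsb => a ea.
  have := sb a; rewrite hmin' // hmax // => /(_ isT) hb.
  have := normr_ge0 s.[a]; rewrite -real_normK ?num_real //; nra.
have hlast : `|h ord_max 0| <= C * vnorm h.
  have h2 : h ord_max 0 ^+ 2 <= C ^+ 2 * sc (h^T *m h).
    by rewrite -hl; apply: le_trans (last_le _ _ ord_max) hsb'.
  rewrite vnorm_sc -(ger0_norm C0) -sqrtr_sqr -[`|C|]sqrtr_sqr -sqrtrM ?sqr_ge0 //.
  by rewrite ler_sqrt // mulr_ge0 ?sqr_ge0 ?sc_ge0.
have vg0 : vnorm g != 0 by rewrite vnorm_sc gt_eqF // sqrtr_gt0 sc_pos.
have e1 : Q *m (M *m h) = - g.
  by rewrite Th mulmxN -scalemxAr Qe1 scalerA mulfV ?scale1r.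
have elh : (e_last R k.+1)^T *m h = (h ord_max 0)%:M.
  apply/matrixP => i j; rewrite !ord1 !mxE (bigD1 ord_max) //= !mxE eqxx mulr1n mul1r.
  rewrite big1 ?addr0 // => l hl0; rewrite !mxE.
  have -> : (nat_of_ord l == k.+1.-1) = false by apply/negbTE; exact: hl0.
  by rewrite mul0r.
have rE : r = beta *: (h ord_max 0 *: q).
  rewrite /r /x mulmxDl mulmxA AQ mulmxDl -!mulmxA -scalemxAl -mulmxA elh.
  rewrite (_ : lambda%:M *m (Q *m h) = Q *m (lambda%:M *m h)); last first.
    by rewrite !mul_scalar_mx scalemxAr.
  rewrite [Q *m (T *m h) + _ + _]addrAC -mulmxDr -mulmxDl -/M e1 addrAC addNr add0r mul_mx_scalar.
  by [].
have vr : vnorm r = beta * `|h ord_max 0|.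
  by rewrite rE !vnormZ nq mulr1 ger0_norm.
have vx : vnorm x = vnorm h.
  by rewrite !vnorm_sc /x trmx_mul mulmxA -[h^T *m Q^T *m Q]mulmxA QQ mulmx1.
rewrite vr vx /= -/kappa.
apply: (le_trans (ler_wpM2l b0 hlast)).
rewrite /C le_eqVlt; apply/orP; left; apply/eqP; ring.
Qed.
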